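(* Let $\mathcal{X}$ be a finite set with symmetric nonnegative weights $(w_{x,x'})$ summing to $1$, with $w_x:=\sum_{x'}w_{x,x'}>0$ for all $x$. Let $\boldsymbol{M}=(m_{x,x'})$ be any real margin matrix. For $f:\mathcal{X}\to\mathbb{R}^k$, define the margin tuning loss $$\mathcal{L}_{\mathrm{M}}(f)=-2\sum_{x,x'}w_{x,x'}f(x)^\top f(x')+\sum_{x,x'}w_xw_{x'}\big[f(x)^\top f(x')+m_{x,x'}\big]^2 .$$ Let $\boldsymbol{A}=(w_{x,x'})$, $\boldsymbol{D}=\mathrm{diag}(w_x)$, $\bar{\boldsymbol{A}}=\boldsymbol{D}^{-1/2}\boldsymbol{A}\boldsymbol{D}^{-1/2}$, and $\bar{\boldsymbol{M}}=\boldsymbol{D}^{1/2}\boldsymbol{M}\boldsymbol{D}^{1/2}$. Let $F$ be the matrix with rows $\sqrt{w_x}\,f(x)^\top$. Then there is a constant $C$, depending only on $(w_{x,x'})$ and $\boldsymbol{M}$ and not on $f$, such that for all $f$ $$\mathcal{L}_{\mathrm{M}}(f)=\|(\bar{\boldsymbol{A}}-\bar{\boldsymbol{M}})-FF^\top\|_F^2+C .$$ In particular, minimizing $\mathcal{L}_{\mathrm{M}}$ over $f$ is equivalent to minimizing $\|(\bar{\boldsymbol{A}}-\bar{\boldsymbol{M}})-FF^\top\|_F^2$ over $F$.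
   Context: $\|\cdot\|_F$ is the Frobenius norm. *)

(* Defs.v *)
From mathcomp Require Import all_boot all_order all_algebra.
Set Implicit Arguments. Unset Strict Implicit. Unset Printing Implicit Defensive.
Import Order.TTheory GRing.Theory Num.Theory.
Local Open Scope ring_scope.

Definition wdeg (R : rcfType) (n : nat) (w : 'I_n -> 'I_n -> R) (x : 'I_n) : R :=
  \sum_(x' < n) w x x'.

Definition dotv (R : rcfType) (k : nat) (u v : 'rV[R]_k) : R :=
  (u *m v^T) 0 0.

Definition margin_loss (R : rcfType) (n k : nat) (w : 'I_n -> 'I_n -> R)
  (M : 'M[R]_n) (f : 'I_n -> 'rV[R]_k) : R :=
  - 2 * (\sum_(x < n) \sum_(x' < n) w x x' * dotv (f x) (f x'))
  + \sum_(x < n) \sum_(x' < n)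
      wdeg w x * wdeg w x' * (dotv (f x) (f x') + M x x') ^+ 2.

Definition adjmx (R : rcfType) (n : nat) (w : 'I_n -> 'I_n -> R) : 'M[R]_n :=
  \matrix_(i, j) w i j.

Definition Dsqrt (R : rcfType) (n : nat) (w : 'I_n -> 'I_n -> R) : 'M[R]_n :=
  diag_mx (\row_i Num.sqrt (wdeg w i)).
Definition Dinvsqrt (R : rcfType) (n : nat) (w : 'I_n -> 'I_n -> R) : 'M[R]_n :=
  diag_mx (\row_i (Num.sqrt (wdeg w i))^-1).

Definition Abar (R : rcfType) (n : nat) (w : 'I_n -> 'I_n -> R) : 'M[R]_n :=
  Dinvsqrt w *m adjmx w *m Dinvsqrt w.
Definition Mbar (R : rcfType) (n : nat) (w : 'I_n -> 'I_n -> R) (M : 'M[R]_n)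
  : 'M[R]_n := Dsqrt w *m M *m Dsqrt w.

Definition Fmx (R : rcfType) (n k : nat) (w : 'I_n -> 'I_n -> R)
  (f : 'I_n -> 'rV[R]_k) : 'M[R]_(n, k) :=
  \matrix_(i, j) (Num.sqrt (wdeg w i) * f i 0 j).

Definition frobenius (R : rcfType) (m p : nat) (A : 'M[R]_(m, p)) : R :=
  Num.sqrt (\sum_(i < m) \sum_(j < p) A i j ^+ 2).

(* Main.v *)
Require Import Defs.
From mathcomp Require Import all_boot all_order all_algebra.
From mathcomp Require Import ring lra.
Import Order.TTheory GRing.Theory Num.Theory.
Local Open Scope ring_scope.

Theorem theorem3 (R : rcfType) (n : nat) (w : 'I_n -> 'I_n -> R) (M : 'M[R]_n)
  (k : nat)
  (w_sym : forall x x', w x x' = w x' x)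
  (w_ge0 : forall x x', 0 <= w x x')
  (w_sum1 : \sum_(x < n) \sum_(x' < n) w x x' = 1)
  (wdeg_gt0 : forall x, 0 < wdeg w x) :
  exists C : R, forall f : 'I_n -> 'rV[R]_k,
    margin_loss w M f
    = frobenius ((Abar w - Mbar w M) - Fmx w f *m (Fmx w f)^T) ^+ 2 + C.
Proof.
set d := wdeg w.
set s := fun i => Num.sqrt (d i).
have s2 : forall i, s i ^+ 2 = d i by move=> i; rewrite sqr_sqrtr // ltW.
have s0 : forall i, s i != 0 by move=> i; rewrite sqrtr_eq0 -ltNge.
set B := fun i j => w i j / (s i * s j) - s i * M i j * s j.
exists (\sum_(i < n) \sum_(j < n) (d i * d j * M i j ^+ 2 - B i j ^+ 2)) => f.
set G := fun i j => dotv (f i) (f j).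
have E : forall i j, ((Abar w - Mbar w M) - Fmx w f *m (Fmx w f)^T) i j
   = B i j - s i * s j * G i j.
  move=> i j.
  rewrite /Abar /Mbar /Dinvsqrt /Dsqrt (mul_mx_diag (diag_mx _ *m adjmx w)) (mul_mx_diag (diag_mx _ *m M)) (mul_diag_mx _ (adjmx w)) (mul_diag_mx _ M) !mxE.
  rewrite /B /G /dotv !mxE.
  congr (_ - _); first by rewrite /s; field; apply/andP; split; apply: s0.
  rewrite mulr_sumr; apply: eq_bigr => l _; rewrite !mxE /s; ring.
rewrite /frobenius sqr_sqrtr; last first.
  by apply: sumr_ge0 => i _; apply: sumr_ge0 => j _; apply: sqr_ge0.
rewrite -big_split /margin_loss mulr_sumr -big_split /=. refine (eq_bigr _ _) => i _ /=.
rewrite mulr_sumr -big_split /= -big_split /=; apply: eq_bigr => j _ /=.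
rewrite E -/(G i j) -/(d i) -/(d j) /B -(s2 i) -(s2 j).
field. by apply/andP; split; apply: s0.
Qed.
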